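(* Let $q\ge2$, $n\ge1$, and let $U$ be a $q\times q$ row-stochastic matrix. Given an $L$-sized ID code with deterministic decoders $\{(Q_j,\mathcal{D}_j):j=1,\dots,L\}$ for the noisy permutation channel $\Sigma_{n,U}$ with Type-I and Type-II error probabilities $\lambda_1,\lambda_2$, there exists an $L$-sized ID code $\{(Q_i',P_i):i=1,\dots,L\}$ with stochastic decoders for the $q$-ary noisy composition channel $q$-NCC$_{n,U}$ having the same error probabilities $\lambda_{i\to j}$ for all $i\ne j$ and $\lambda_{i\not\to i}$ for all $i$ (in particular the same $\lambda_1,\lambda_2$). Moreover, if each $Q_i$ is a point mass (deterministic encoder), then each $Q_i'$ is also a point mass.
   Context: $\Sigma_{n,U}$: input $\mathbf{x}\in[1:q]^n$, permuted by a uniformly random permutation of $[1:n]$, then each coordinate passed independently through the DMC $U$; $P_\Sigma(\mathbf{y}|\mathbf{x})=\frac1{n!}\sum_\sigma\prod_iU(y_i|x_{\sigma^{-1}(i)})$. The composition of $\mathbf{x}$ is $(N(1|\mathbf{x}),\dots,N(q|\mathbf{x}))$ with $N(c|\mathbf{x})=|\{i:x_i=c\}|$; $\mathcal{N}_{q,n}$ is the set of compositions of vectors in $[1:q]^n$. $q$-NCC$_{n,U}$ has input and output alphabet $\mathcal{N}_{q,n}$ and $P_{q\text{-NC}}(\mathbf{w}|\mathbf{t})=\sum_{\mathbf{z}:\text{ composition } \mathbf{w}}\prod_iU(z_i|x_i)$ for any $\mathbf{x}$ of composition $\mathbf{t}$. ID codes for a channel $P$ from $\mathcal{A}$ to $\mathcal{B}$: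 pairs $(Q_i,P_i)$ with $Q_i$ a distribution on $\mathcal{A}$ and $P_i(1|y)\in[0,1]$, $P_i(0|y)=1-P_i(1|y)$ (deterministic decoders: $P_i(1|y)=\mathbb{1}\{y\in\mathcal{D}_i\}$). $\lambda_{i\to j}=\sum_{x,y}Q_i(x)P(y|x)P_j(1|y)$, $\lambda_{i\not\to i}=\sum_{x,y}Q_i(x)P(y|x)P_i(0|y)$, $\lambda_1=\max_i\lambda_{i\not\to i}$, $\lambda_2=\max_{i\ne j}\lambda_{i\to j}$. *)

(* Defs.v *)
From HB Require Import structures.
From mathcomp Require Import all_boot all_order all_algebra all_fingroup.
From mathcomp Require Import reals.
Set Implicit Arguments. Unset Strict Implicit. Unset Printing Implicit Defensive.
Import Order.TTheory GRing.Theory Num.Theory.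
Local Open Scope ring_scope.

(* A channel from A to B is a kernel W : A -> B -> R, W x y = P(y|x). *)

Definition is_distr (R : realType) (A : finType) (Q : A -> R) : Prop :=
  (forall a, 0 <= Q a) /\ \sum_(a : A) Q a = 1.

Definition point_mass (R : realType) (A : finType) (Q : A -> R) : Prop :=
  exists a0 : A, forall a, Q a = (a == a0)%:R.

(* stochastic decoder: P_i(1|y) in [0,1] *)
Definition is_decoder (R : realType) (B : finType) (P1 : B -> R) : Prop :=
  forall b, 0 <= P1 b <= 1.

Definition det_decoder (R : realType) (B : finType) (D : {set B}) : B -> R :=
  fun b => (b \in D)%:R.

Definition lam_to (R : realType) (A B : finType) (W : A -> B -> R)
  (Qi : A -> R) (Pj : B -> R) : R :=
  \sum_(a : A) \sum_(b : B) Qi a * W a b * Pj b.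

Definition lam_not (R : realType) (A B : finType) (W : A -> B -> R)
  (Qi : A -> R) (Pi : B -> R) : R :=
  \sum_(a : A) \sum_(b : B) Qi a * W a b * (1 - Pi b).

Definition row_stochastic (R : realType) (q : nat) (U : 'M[R]_q) : Prop :=
  (forall a b, 0 <= U a b) /\ (forall a, \sum_(b < q) U a b = 1).

(* vectors in [1:q]^n, letters indexed by 'I_q *)
Definition word (q n : nat) := {ffun 'I_n -> 'I_q}.

(* composition (N(1|x), ..., N(q|x)); each count is <= n *)
Definition compo (q n : nat) (x : word q n) : {ffun 'I_q -> 'I_n.+1} :=
  [ffun c => inord #|[set i | x i == c]|].

Definition comps (q n : nat) :=
  {t : {ffun 'I_q -> 'I_n.+1} | [exists x : word q n, compo x == t]}.

Definition PSigma (R : realType) (q n : nat) (U : 'M[R]_q)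
  (x y : word q n) : R :=
  (n`!%:R)^-1 * \sum_(s : 'S_n) \prod_(i < n) U (x ((s^-1)%g i)) (y i).

(* a fixed vector of composition t (any one; P_qNC does not depend on it) *)
Definition comp_rep (q n : nat) (t : comps q n) : word q n :=
  xchoose (existsP (valP t)).

Definition PqNC (R : realType) (q n : nat) (U : 'M[R]_q)
  (t w : comps q n) : R :=
  \sum_(z : word q n | compo z == val w)
     \prod_(i < n) U (comp_rep t i) (z i).

(* Main.v *)
Require Import Defs.
From HB Require Import structures.
From mathcomp Require Import all_boot all_order all_algebra all_fingroup.
From mathcomp Require Import reals.
Import Order.TTheory GRing.Theory Num.Theory.
Local Open Scope ring_scope.
Set Implicit Arguments. Unset Strict Implicit. Unset Printing Implicit Defensive.

Lemma compo_card (q n : nat) (x y : word q n) :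
  compo x = compo y -> forall c, #|[set i | x i == c]| = #|[set i | y i == c]|.
Proof.
move=> e c; move: (congr1 (fun f : {ffun 'I_q -> 'I_n.+1} => val (f c)) e); rewrite /compo !ffunE.
have le (z : word q n) : (#|[set i | z i == c]| < n.+1)%N.
  by rewrite ltnS; apply: leq_trans (max_card _) _; rewrite card_ord.
by move=> /= ; rewrite !inordK ?le.
Qed.

Lemma count_word (q n : nat) (x : word q n) (a : pred 'I_q) :
  count a [tuple x i | i < n] = (\sum_(c | a c) #|[set i | x i == c]|)%N.
Proof.
rewrite /= count_map -sum1_count.
rewrite (partition_big x a) //=.
apply: eq_bigr => c ac.
rewrite -sum1_card big_enum_cond /=; apply: eq_bigl => i.
rewrite inE; case: eqP => [->|] /=; by rewrite ?ac ?andbF.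
Qed.

Lemma compo_perm (q n : nat) (x y : word q n) :
  compo x = compo y -> exists p : 'S_n, forall i, x i = y (p i).
Proof.
move=> e.
have : perm_eq [tuple x i | i < n] [tuple y i | i < n].
  by apply/seq.permP => a; rewrite !count_word; apply: eq_bigr => c _; apply: compo_card.
case/tuple_permP => p hp; exists p => i.
have := congr1 (fun t : n.-tuple 'I_q => tnth t i) (val_inj hp).
by rewrite /= !tnth_mktuple.
Qed.


Definition wperm (q n : nat) (z : word q n) (p : 'S_n) : word q n := [ffun i => z (p i)].

Lemma compo_wperm (q n : nat) (z : word q n) p : compo (wperm z p) = compo z.
Proof.
apply/ffunP => c; rewrite !ffunE; congr inord.
have -> : [set i | wperm z p i == c] = p @^-1: [set i | z i == c].
  by apply/setP => i; rewrite !inE ffunE.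
by rewrite card_preimset //; apply: perm_inj.
Qed.

Lemma sum_wperm (R : realType) (q n : nat) (F : word q n -> R) w p :
  \sum_(z | compo z == w) F (wperm z p) = \sum_(z | compo z == w) F z.
Proof.
have inj : injective (fun z : word q n => wperm z p).
  move=> z1 z2 e; apply/ffunP => i.
  have := congr1 (fun f : word q n => f (p^-1 i)%g) e.
  by rewrite !ffunE permKV.
rewrite [RHS](reindex_inj inj) /=; apply: eq_bigl => z.
by rewrite compo_wperm.
Qed.

Lemma sum_PSigma (R : realType) (q n : nat) (U : 'M[R]_q) (x : word q n) w :
  \sum_(y | compo y == w) PSigma U x y =
  \sum_(z | compo z == w) \prod_(i < n) U (x i) (z i).
Proof.
rewrite /PSigma -mulr_sumr exchange_big /=.
under eq_bigr => s _.
  rewrite -(sum_wperm _ _ s^-1%g).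
  under eq_bigr => y _.
    rewrite (reindex_inj (@perm_inj _ s)) /=.
    under eq_bigr => i _ do rewrite ffunE !permK.
  over.
over.
rewrite /= sumr_const card_Sn; set S := (\sum_(y | _) _); rewrite -(mulr_natl S) mulrA mulVf ?mul1r //.
by rewrite pnatr_eq0 -lt0n fact_gt0.
Qed.

Lemma PSigma_compo (R : realType) (q n : nat) (U : 'M[R]_q) (x y y' : word q n) :
  compo y = compo y' -> PSigma U x y = PSigma U x y'.
Proof.
move=> e; have [p hp] := compo_perm (esym e).
rewrite /PSigma; congr (_ * _).
under [RHS]eq_bigr => s _.
  rewrite (reindex_inj (@perm_inj _ p^-1%g)) /=.
  under eq_bigr => i _ do rewrite hp permKV -permM -invMg.
over.
by rewrite /= [LHS](reindex_inj (mulIg p)).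
Qed.

Lemma PqNC_eq (R : realType) (q n : nat) (U : 'M[R]_q) (x : word q n) t w :
  compo x = val t ->
  PqNC U t w = \sum_(z | compo z == val w) \prod_(i < n) U (x i) (z i).
Proof.
move=> e; rewrite /PqNC.
have er : compo (comp_rep t) = compo x.
  by rewrite e; apply/eqP; rewrite /comp_rep; apply: (xchooseP (existsP (valP t))).
have [p hp] := compo_perm er.
under eq_bigr => z _ do under eq_bigr => i _ do rewrite hp.
rewrite -(sum_wperm _ _ p); apply: eq_bigr => z _.
by rewrite [RHS](reindex_inj (@perm_inj _ p)) /=; apply: eq_bigr => i _; rewrite ffunE.
Qed.

Definition cmp (q n : nat) (x : word q n) : comps q n :=
  @exist _ (fun t => [exists y : word q n, compo y == t]) (compo x)
    (introT existsP (ex_intro (fun y : word q n => compo y == compo x) x (eqxx _))).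

Lemma cmpE (q n : nat) (x : word q n) (t : comps q n) :
  (cmp x == t) = (compo x == val t).
Proof. by rewrite -val_eqE. Qed.

Definition Tw (q n : nat) (w : comps q n) := [set y : word q n | compo y == val w].

Definition avg (R : realType) (q n : nat) (g : word q n -> R) (w : comps q n) : R :=
  (\sum_(y in Tw w) g y) / #|Tw w|%:R.

Lemma Tw_gt0 (q n : nat) (w : comps q n) : (0 < #|Tw w|)%N.
Proof.
apply/card_gt0P; exists (comp_rep w); rewrite inE.
exact: (xchooseP (existsP (valP w))).
Qed.

Lemma key (R : realType) (q n : nat) (U : 'M[R]_q) (g : word q n -> R) (x : word q n) :
  \sum_w PqNC U (cmp x) w * avg g w = \sum_y PSigma U x y * g y.
Proof.
rewrite [RHS](partition_big (@cmp q n) xpredT) //=.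
apply: eq_bigr => w _.
have hw : compo (comp_rep w) = val w by apply/eqP; exact: (xchooseP (existsP (valP w))).
have e1 : \sum_(y | true && (cmp y == w)) PSigma U x y * g y =
          PSigma U x (comp_rep w) * \sum_(y in Tw w) g y.
  rewrite mulr_sumr; apply: eq_big => y; first by rewrite cmpE inE.
  by rewrite cmpE => /eqP e; rewrite (PSigma_compo _ _ (etrans e (esym hw))).
rewrite e1 (@PqNC_eq _ _ _ _ x (cmp x) w erefl) -sum_PSigma.
have -> : \sum_(y | compo y == val w) PSigma U x y = \sum_(y in Tw w) PSigma U x (comp_rep w).
  apply: eq_big => y; first by rewrite inE.
  by move=> /eqP e; rewrite (PSigma_compo _ _ (etrans e (esym hw))).
rewrite sumr_const /avg; set P := PSigma U x (comp_rep w); set S := \sum_(y in Tw w) g y.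
rewrite -(mulr_natr P) -mulrA; congr (_ * _); rewrite mulrCA mulfV ?mulr1 //.
by rewrite pnatr_eq0 -lt0n Tw_gt0.
Qed.

Lemma red (R : realType) (q n : nat) (Qi : word q n -> R) (K : comps q n -> comps q n -> R)
  (Pw : comps q n -> R) :
  \sum_t \sum_w (\sum_(x | cmp x == t) Qi x) * K t w * Pw w =
  \sum_x Qi x * \sum_w K (cmp x) w * Pw w.
Proof.
under eq_bigr => t _ do under eq_bigr => w _ do rewrite -mulrA mulr_suml.
under eq_bigr => t _ do rewrite exchange_big /=.
rewrite [RHS](partition_big (@cmp q n) xpredT) //=; apply: eq_bigr => t _.
apply: eq_big => // x /eqP <-; by rewrite mulr_sumr.
Qed.

Lemma avg_ge0_le1 (R : realType) (q n : nat) (D : {set word q n}) w :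
  0 <= avg (det_decoder R D) w <= 1.
Proof.
have N0 : 0 < #|Tw w|%:R :> R by rewrite ltr0n Tw_gt0.
rewrite /avg divr_ge0 ?ler0n //=; last by apply: sumr_ge0 => y _; rewrite /det_decoder ler0n.
rewrite ler_pdivrMr // mul1r -sumr_const.
apply: ler_sum => y _; rewrite /det_decoder; by case: (y \in D).
Qed.

Lemma avg_compl (R : realType) (q n : nat) (D : {set word q n}) w :
  1 - avg (det_decoder R D) w = avg (fun y => 1 - det_decoder R D y) w.
Proof.
have N0 : #|Tw w|%:R != 0 :> R by rewrite pnatr_eq0 -lt0n Tw_gt0.
rewrite /avg sumrB sumr_const mulrBl -[_ *+ _]mulr_natl mulr1 mulfV //.
Qed.

Theorem lemma2 (R : realType) (q n : nat) (hq : (2 <= q)%N) (hn : (1 <= n)%N)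
  (U : 'M[R]_q) (hU : row_stochastic U) (L : nat)
  (Q : 'I_L -> word q n -> R) (D : 'I_L -> {set word q n})
  (hQ : forall i, is_distr (Q i)) :
  exists (Q' : 'I_L -> comps q n -> R) (P : 'I_L -> comps q n -> R),
    (forall i, is_distr (Q' i)) /\ (forall i, is_decoder (P i)) /\
    (forall i j, i != j ->
       lam_to (PqNC U) (Q' i) (P j) = lam_to (PSigma U) (Q i) (det_decoder R (D j))) /\
    (forall i,
       lam_not (PqNC U) (Q' i) (P i) = lam_not (PSigma U) (Q i) (det_decoder R (D i))) /\
    ((forall i, point_mass (Q i)) -> forall i, point_mass (Q' i)).
Proof.
exists (fun i t => \sum_(x | cmp x == t) Q i x).
exists (fun j w => avg (det_decoder R (D j)) w).
split.
  move=> i; have [h0 h1] := hQ i; split.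
    by move=> t; apply: sumr_ge0 => x _.
  by rewrite -h1 [RHS](partition_big (@cmp q n) xpredT).
split; first by move=> j w; apply: avg_ge0_le1.
split.
  move=> i j _; rewrite /lam_to red; apply: eq_bigr => x _.
  rewrite key mulr_sumr; apply: eq_bigr => y _; by rewrite mulrA.
split.
  move=> i; rewrite /lam_not.
  under eq_bigr => t _ do under eq_bigr => w _ do rewrite avg_compl.
  rewrite red; apply: eq_bigr => x _.
  rewrite key mulr_sumr; apply: eq_bigr => y _; by rewrite mulrA.
move=> hpm i; have [x0 hx0] := hpm i; exists (cmp x0) => t.
under eq_bigr => x _ do rewrite hx0.
rewrite big_mkcond (bigD1 x0) //= eqxx big1 ?addr0.
  by rewrite eq_sym; case: eqP.
by move=> x /negbTE ->; case: ifP.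
Qed.
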